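(* Let $t$ be the number of erroneous nodes in the distributed storage system built from the concatenation of an MRD code and an optimal repair MDS array code, as described in the context. If $2t\alpha+1\leq \delta$, then the original data can be recovered from any $k$ nodes.
   Context: A file of size $M=KN$ over $\mathbb{F}_q$ (with $K<N$) is arranged as an $N\times K$ matrix $\mathcal{M}$ over $\mathbb{F}_q$. Let $\mathcal{C}$ be an $[N\times m, NK, \delta=m-K+1]$ Gabidulin maximum rank distance (MRD) code with $m\leq N$, whose codewords are viewed as vectors in $\mathbb{F}_{q^N}^m$; let $\mathbf{c}_{\mathcal{M}}\in\mathbb{F}_{q^N}^m$ be the codeword corresponding to $\mathcal{M}$. Let $\alpha,k$ be positive integers with $m=\alpha k$, and set $Q=q^N$. Let $C$ be an $(n,k)$ optimal repair MDS array code of dimensions $\alpha\times n$ whose generator matrix (a $k\times n$ block matrix of $\alpha\times\alpha$ blocks) is over $\mathbb{F}_q$, and whose node repairs use $\mathbb{F}_q$-linear combinations of stored symbols; here an MDS array code means any $k$ nodes suffice to recover the encoded data, and optimal repair means a failed node can be repaired by downloading $\alpha d/(d-k+1)$ symbols from each node in any set of $d\ge k$ surviving nodes. The vector $\mathbf{c}_{\mathcal{M}}$ is split into $k$ blocks of size $\alpha$ and encoded with $C$ into $n$ nodes each storing $\alpha$ symbols of $\mathbb{F}_Q$. Errors are static: an adversary replaces the content of each of the $t$ affected nodes (adds an arbitrary error vector in $\mathbb{F}_Q^\alpha$) only once, and the affected node uses this same polluted content in all subsequent repair and data-collection processes; repairs are performed obliviously, so errors may propagate to repaired nodes. *)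

(* Defs.v *)
From HB Require Import structures.
From mathcomp Require Import all_boot all_algebra all_field.

Set Implicit Arguments.
Unset Strict Implicit.
Unset Printing Implicit Defensive.

Import GRing.Theory.
Local Open Scope ring_scope.

(* F plays the role of F_q, L the role of F_Q = F_{q^N} (a finite-dimensional
   field extension of F). *)

Definition lift_mx (F : fieldType) (L : fieldExtType F) (m p : nat)
  (A : 'M[F]_(m, p)) : 'M[L]_(m, p) := map_mx (fun a : F => a%:A) A.

(* b : an F-basis of L (to read a column of the N x K file matrix as an element
   of L); g : the m = alpha*k evaluation points, F-linearly independent,
   indexed as (block j, position r) so that the codeword is already split into
   k blocks of size alpha. *)
Definition gab_msg (F : finFieldType) (L : fieldExtType F) (N K : nat)
  (b : 'I_N -> L) (M : 'M[F]_(N, K)) (l : 'I_K) : L :=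
  \sum_(i < N) M i l *: b i.

Definition gab_enc (F : finFieldType) (L : fieldExtType F) (N K k alpha : nat)
  (b : 'I_N -> L) (g : 'I_k -> 'I_alpha -> L) (M : 'M[F]_(N, K))
  : 'I_k -> 'rV[L]_alpha :=
  fun j => \row_(r < alpha)
    \sum_(l < K) gab_msg b M l * g j r ^+ (#|F| ^ l)%N.

(* G j i : the (j,i) alpha x alpha block of the k x n block generator matrix *)
Definition encF (F : fieldType) (k n alpha : nat)
  (G : 'I_k -> 'I_n -> 'M[F]_alpha) (x : 'I_k -> 'rV[F]_alpha) (i : 'I_n)
  : 'rV[F]_alpha := \sum_(j < k) x j *m G j i.

Definition encL (F : fieldType) (L : fieldExtType F) (k n alpha : nat)
  (G : 'I_k -> 'I_n -> 'M[F]_alpha) (x : 'I_k -> 'rV[L]_alpha) (i : 'I_n)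
  : 'rV[L]_alpha := \sum_(j < k) x j *m lift_mx L (G j i).

Definition is_MDS_array (F : fieldType) (k n alpha : nat)
  (G : 'I_k -> 'I_n -> 'M[F]_alpha) : Prop :=
  forall S : {set 'I_n}, #|S| = k ->
  forall x y : 'I_k -> 'rV[F]_alpha,
    (forall i, i \in S -> encF G x i = encF G y i) -> x = y.

Definition repair_beta (k alpha d : nat) : nat := (alpha %/ (d.+1 - k))%N.

(* Optimal (linear) repair: a failed node f is repaired from any set H of d
   other nodes; helper h sends beta = alpha/(d-k+1) F-linear combinations
   (content_h *m Dm f H h) of its symbols, and f rebuilds its content
   F-linearly from the downloaded symbols (via Rm f H h). *)
Definition optimal_repair (F : fieldType) (k n alpha d : nat)
  (G : 'I_k -> 'I_n -> 'M[F]_alpha)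
  (Dm : 'I_n -> {set 'I_n} -> 'I_n -> 'M[F]_(alpha, repair_beta k alpha d))
  (Rm : 'I_n -> {set 'I_n} -> 'I_n -> 'M[F]_(repair_beta k alpha d, alpha))
  : Prop :=
  [/\ (k <= d)%N, (d < n)%N, (d.+1 - k %| alpha)%N &
   forall (f : 'I_n) (H : {set 'I_n}), f \notin H -> #|H| = d ->
   forall x : 'I_k -> 'rV[F]_alpha,
     \sum_(h in H) (encF G x h *m Dm f H h) *m Rm f H h = encF G x f].

Inductive event (L : Type) (n alpha : nat) : Type :=
  | Inject of 'I_n & 'rV[L]_alpha
  | Repair of 'I_n & {set 'I_n}.

(* state: node contents and the set of nodes affected by the adversary *)
Definition sys_state (L : Type) (n alpha : nat) : Type :=
  (('I_n -> 'rV[L]_alpha) * {set 'I_n})%type.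

Definition sys_step (F : fieldType) (L : fieldExtType F) (k n alpha d : nat)
  (Dm : 'I_n -> {set 'I_n} -> 'I_n -> 'M[F]_(alpha, repair_beta k alpha d))
  (Rm : 'I_n -> {set 'I_n} -> 'I_n -> 'M[F]_(repair_beta k alpha d, alpha))
  (s : sys_state L n alpha) (ev : event L n alpha) : sys_state L n alpha :=
  let: (c, A) := s in
  match ev with
  | Inject i e =>
      (* each affected node is polluted only once *)
      if i \in A then s
      else ((fun j => if j == i then c j + e else c j), i |: A)
  | Repair f H =>
      (* affected nodes keep their polluted content; repairs are oblivious *)
      if (f \in A) || (f \in H) || (#|H| != d) then s
      else ((fun j => if j == f then
               \sum_(h in H) (c h *m lift_mx L (Dm f H h)) *m lift_mx L (Rm f H h)
             else c j), A)
  end.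

Definition sys_run (F : finFieldType) (L : fieldExtType F) (N K k n alpha d : nat)
  (b : 'I_N -> L) (g : 'I_k -> 'I_alpha -> L)
  (G : 'I_k -> 'I_n -> 'M[F]_alpha)
  (Dm : 'I_n -> {set 'I_n} -> 'I_n -> 'M[F]_(alpha, repair_beta k alpha d))
  (Rm : 'I_n -> {set 'I_n} -> 'I_n -> 'M[F]_(repair_beta k alpha d, alpha))
  (M : 'M[F]_(N, K)) (evs : seq (event L n alpha)) : sys_state L n alpha :=
  foldl (sys_step Dm Rm) (encL G (gab_enc b g M), set0) evs.

(* what a data collector connecting to the node set S sees *)
Definition restrict (F : fieldType) (L : fieldExtType F) (n alpha : nat) (S : {set 'I_n})
  (c : 'I_n -> 'rV[L]_alpha) : 'I_n -> 'rV[L]_alpha :=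
  fun i => if i \in S then c i else 0.

(* Main.v *)
Require Import Defs.
From HB Require Import structures.
From mathcomp Require Import all_boot all_algebra all_field.
From mathcomp Require Import zify.
From Stdlib Require Import ClassicalEpsilon.

Import GRing.Theory.
Local Open Scope ring_scope.

Module Aux.
Set Implicit Arguments. Unset Strict Implicit.

Lemma mem_mulmx_lift (F : fieldType) (L : fieldExtType F) (alpha beta : nat)
  (V : {vspace L}) (v : 'rV[L]_alpha) (A : 'M[F]_(alpha, beta)) :
  (forall r, v 0 r \in V) -> forall c, (v *m lift_mx L A) 0 c \in V.
Proof.
move=> Hv c; rewrite mxE; apply: memv_suml => r _.
by rewrite /lift_mx mxE mulr_algr memvZ.
Qed.

Lemma lift_mxM (F : fieldType) (L : fieldExtType F) m p r (A : 'M[F]_(m,p)) (B : 'M[F]_(p,r)) :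
  lift_mx L (A *m B) = lift_mx L A *m lift_mx L B.
Proof. by rewrite /lift_mx (map_mxM (in_alg L)). Qed.

Lemma lift_mx_sum (F : fieldType) (L : fieldExtType F) m p (I : finType) (P : pred I) (A : I -> 'M[F]_(m,p)) :
  lift_mx L (\sum_(i | P i) A i) = \sum_(i | P i) lift_mx L (A i).
Proof.
apply/matrixP => x y; rewrite /lift_mx summxE mxE summxE.
rewrite -[in LHS]/(in_alg L _) (raddf_sum (in_alg L)); by apply: eq_bigr => i _; rewrite mxE.
Qed.

Lemma repair_lift (F : fieldType) (L : fieldExtType F) (k n alpha d : nat)
  (G : 'I_k -> 'I_n -> 'M[F]_alpha)
  (Dm : 'I_n -> {set 'I_n} -> 'I_n -> 'M[F]_(alpha, repair_beta k alpha d))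
  (Rm : 'I_n -> {set 'I_n} -> 'I_n -> 'M[F]_(repair_beta k alpha d, alpha)) :
  optimal_repair G Dm Rm ->
  forall (f : 'I_n) (H : {set 'I_n}), f \notin H -> #|H| = d ->
   forall x : 'I_k -> 'rV[L]_alpha,
     \sum_(h in H) (encL G x h *m lift_mx L (Dm f H h)) *m lift_mx L (Rm f H h)
       = encL G x f.
Proof.
case=> _ _ _ Hrep f H fH cH x.
have key : forall j, \sum_(h in H) G j h *m Dm f H h *m Rm f H h = G j f.
  move=> j; apply/row_matrixP => r.
  have E := Hrep f H fH cH (fun j' => if j' == j then delta_mx 0 r else 0).
  have encj : forall i, encF G (fun j' => if j' == j then delta_mx 0 r else 0) i
      = delta_mx 0 r *m G j i.
    move=> i; rewrite /encF (bigD1 j) //= eqxx big1 ?addr0 //.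
    by move=> j' /negPf ->; rewrite mul0mx.
  rewrite encj in E.
  rewrite !rowE -E mulmx_sumr; apply: eq_bigr => h _.
  by rewrite encj !mulmxA.
rewrite /encL.
under eq_bigr => h _ do rewrite mulmx_suml mulmx_suml.
rewrite exchange_big /=; apply: eq_bigr => j _.
rewrite -key lift_mx_sum mulmx_sumr; apply: eq_bigr => h _.
by rewrite !lift_mxM !mulmxA.
Qed.

Definition Inv (F : fieldType) (L : fieldExtType F) (n alpha : nat)
  (c0 : 'I_n -> 'rV[L]_alpha) (s : sys_state L n alpha) : Prop :=
  exists V : {vspace L}, (\dim V <= alpha * #|s.2|)%N /\
    forall i r, (s.1 i - c0 i) 0 r \in V.

Lemma inv_step (F : fieldType) (L : fieldExtType F) (k n alpha d : nat)
  (G : 'I_k -> 'I_n -> 'M[F]_alpha)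
  (Dm : 'I_n -> {set 'I_n} -> 'I_n -> 'M[F]_(alpha, repair_beta k alpha d))
  (Rm : 'I_n -> {set 'I_n} -> 'I_n -> 'M[F]_(repair_beta k alpha d, alpha))
  (x : 'I_k -> 'rV[L]_alpha) :
  optimal_repair G Dm Rm ->
  forall s ev, Inv (encL G x) s -> Inv (encL G x) (sys_step Dm Rm s ev).
Proof.
move=> Hopt [c A] [i e | f H] [V [dV HV]] /=.
- case: ifP => iA; first by exists V.
  exists (V + <<[seq e 0%R r | r <- enum 'I_alpha]>>)%VS; split.
    rewrite /= cardsU1 iA /= mulnDr muln1 addnC.
    apply: leq_trans (dimv_add_leqif _ _) _.
    apply: leq_add => //.
    by apply: leq_trans (dim_span _) _; rewrite size_map size_enum_ord.
  move=> j r /=; case: eqP => [-> | _].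
    rewrite addrAC mxE; apply: memvD.
      by apply: (subvP (addvSl _ _)); apply: HV.
    apply: (subvP (addvSr _ _)); apply: memv_span.
    by apply: map_f; rewrite mem_enum.
  by apply: (subvP (addvSl _ _)); apply: HV.
- case: ifP => cond; first by exists V.
  move/negbT: cond; rewrite !negb_or negbK => /andP[/andP[fA fH] /eqP cH].
  exists V; split => // j r /=.
  case: eqP => [-> | _]; last exact: HV.
  rewrite -(repair_lift Hopt fH cH) -sumrB summxE; apply: memv_suml => h _.
  rewrite -mulmxBl -mulmxBl.
  apply: mem_mulmx_lift => c1; apply: mem_mulmx_lift => c2.
  exact: HV.
Qed.

Lemma inv_run (F : finFieldType) (L : fieldExtType F) (N K k n alpha d : nat)
  (b : 'I_N -> L) (g : 'I_k -> 'I_alpha -> L)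
  (G : 'I_k -> 'I_n -> 'M[F]_alpha)
  (Dm : 'I_n -> {set 'I_n} -> 'I_n -> 'M[F]_(alpha, repair_beta k alpha d))
  (Rm : 'I_n -> {set 'I_n} -> 'I_n -> 'M[F]_(repair_beta k alpha d, alpha))
  (M : 'M[F]_(N, K)) evs :
  optimal_repair G Dm Rm ->
  Inv (encL G (gab_enc b g M)) (sys_run b g G Dm Rm M evs).
Proof.
move=> Hopt; rewrite /sys_run.
have : Inv (encL G (gab_enc b g M)) (encL G (gab_enc b g M), set0).
  exists 0%VS; split; first by rewrite dimv0.
  by move=> i r /=; rewrite subrr mxE mem0v.
elim: evs (encL G (gab_enc b g M), set0) => [|ev evs IH] s Hs //=.
by apply: IH; apply: inv_step.
Qed.

Section Phi.
Variables (F : fieldType) (L : fieldExtType F) (phi : L -> F).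
Hypothesis phiD : forall (a : F) (u v : L), phi (a *: u + v) = a * phi u + phi v.

Lemma phi0 : phi 0 = 0.
Proof.
have := phiD 1 0 0; rewrite scaler0 add0r mul1r => /eqP.
by rewrite -[X in X == _]addr0 => /eqP /addrI /esym.
Qed.

Lemma phiZ a u : phi (a *: u) = a * phi u.
Proof. by have := phiD a u 0; rewrite addr0 phi0 addr0. Qed.

Lemma phiDD u v : phi (u + v) = phi u + phi v.
Proof. by have := phiD 1 u v; rewrite scale1r mul1r. Qed.

Lemma phi_sum (I : Type) (r : seq I) (P : pred I) (f : I -> L) :
  phi (\sum_(i <- r | P i) f i) = \sum_(i <- r | P i) phi (f i).
Proof.
elim: r => [|x r IH]; first by rewrite !big_nil phi0.
by rewrite !big_cons; case: (P x); rewrite ?phiDD IH.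
Qed.

Lemma phi_encL (k n alpha : nat) (G : 'I_k -> 'I_n -> 'M[F]_alpha)
  (x : 'I_k -> 'rV[L]_alpha) i :
  map_mx phi (encL G x i) = encF G (fun j => map_mx phi (x j)) i.
Proof.
apply/rowP => c; rewrite /encL /encF mxE !summxE phi_sum; apply: eq_bigr => j _.
rewrite !mxE phi_sum; apply: eq_bigr => r _.
by rewrite !mxE mulr_algr phiZ mulrC.
Qed.
End Phi.

Lemma encF0 (F : fieldType) (k n alpha : nat) (G : 'I_k -> 'I_n -> 'M[F]_alpha) i :
  encF G (fun _ => 0) i = 0.
Proof. by rewrite /encF big1 // => j _; rewrite mul0mx. Qed.

Lemma mds_lift (F : fieldType) (L : fieldExtType F) (k n alpha : nat)
  (G : 'I_k -> 'I_n -> 'M[F]_alpha) : is_MDS_array G ->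
  forall S : {set 'I_n}, #|S| = k ->
  forall (W : {vspace L}) (x : 'I_k -> 'rV[L]_alpha),
  (forall i, i \in S -> forall r, encL G x i 0 r \in W) ->
  forall j r, x j 0 r \in W.
Proof.
move=> Hmds S cS W x HW j r; apply/negPn/negP => Hv.
set v := x j 0 r in Hv.
set w := v - projv W v.
have w0 : w != 0.
  apply: contra Hv; rewrite subr_eq0 => /eqP ->; exact: memv_proj.
have [i0 Hi0] : exists i0, coord (vbasis fullv) i0 w != 0.
  apply/existsP; apply: contraR w0; rewrite negb_exists => /forallP H.
  rewrite (coord_vbasis (memvf w)) big1 // => i _.
  by have := H i; rewrite negbK => /eqP ->; rewrite scale0r.
pose phi (z : L) := coord (vbasis fullv) i0 (z - projv W z).
have phiD : forall (a : F) (u v : L), phi (a *: u + v) = a * phi u + phi v.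
  move=> a u v'; rewrite /phi -linearP /=.
  by rewrite linearP /= scalerBr addrACA opprD.
pose y := fun j => map_mx phi (x j).
have y0 : y = (fun _ => 0).
  apply: (Hmds S cS y (fun _ => 0)) => i iS.
  rewrite encF0 -phi_encL //; apply/rowP => c; rewrite !mxE /phi.
  by rewrite projv_id ?subrr ?linear0 //; apply: HW.
have : y j 0 r = 0 by rewrite y0 mxE.
by rewrite mxE -/v /phi -/w => /eqP; rewrite (negbTE Hi0).
Qed.

Section Gab.
Variables (F : finFieldType) (L : fieldExtType F).
Local Notation q := #|F|.

Lemma frobD (l : nat) (x y : L) :
  (x + y) ^+ (q ^ l) = x ^+ (q ^ l) + y ^+ (q ^ l).
Proof.
case: (finPcharP F) => p pp pc.
have -> : q = (p ^ logn p q)%N by exact: (card_pprimeChar pc).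
apply: exprDn_pchar.
rewrite -expnM pnatX; apply/orP; left.
rewrite (eq_pnat _ (pchar_lalg L)).
by rewrite pnatE //= (pcharf_eq pc).
Qed.

Lemma expF_card_pow (a : F) l : a ^+ (q ^ l) = a.
Proof.
elim: l => [|l IH]; first by rewrite expn0 expr1.
by rewrite expnSr exprM IH expf_card.
Qed.

Lemma frobZ (l : nat) (a : F) (x : L) : (a *: x) ^+ (q ^ l) = a *: x ^+ (q ^ l).
Proof.
by rewrite exprZn expF_card_pow.
Qed.

Definition flin (K : nat) (u : 'I_K -> L) (z : L) : L :=
  \sum_(l < K) u l * z ^+ (q ^ l).

Lemma flin_is_linear K u : linear (@flin K u).
Proof.
move=> a x y; rewrite /flin scaler_sumr -big_split /=; apply: eq_bigr => l _.
by rewrite frobD frobZ mulrDr -scalerAr.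
Qed.

HB.instance Definition _ K u :=
  GRing.isLinear.Build F L L *:%R (@flin K u) (@flin_is_linear K u).

Lemma q_gt1 : (1 < q)%N.
Proof. exact: card_finNzRing_gt1. Qed.

Lemma flin_roots K (u : 'I_K -> L) (U : {vspace L}) :
  (K <= \dim U)%N -> (forall z, z \in U -> flin u z = 0) -> forall l, u l = 0.
Proof.
move=> dU Hz l0; apply/eqP/negP => /negP ul0.
pose P : {poly L} := \sum_(l < K) u l *: 'X^(q ^ l).
have PE z : P.[z] = flin u z.
  rewrite /P horner_sum /flin; apply: eq_bigr => l _.
  by rewrite hornerZ hornerXn.
have coefP : P`_(q ^ l0) = u l0.
  rewrite /P coef_sum (bigD1 l0) //= coefZ coefXn eqxx mulr1 big1 ?addr0 //.
  move=> l /negPf nl; rewrite coefZ coefXn eqn_exp2l ?q_gt1 //.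
  by rewrite eq_sym -(inj_eq val_inj) /= in nl; rewrite nl mulr0.
have P0 : P != 0 by apply: contraNneq ul0 => P0; rewrite -coefP P0 coef0.
have sP : (size P <= (q ^ K.-1).+1)%N.
  rewrite /P; apply: (leq_trans (size_sum _ _ _)).
  apply/bigmax_leqP => l _; apply: leq_trans (size_scale_leq _ _) _.
  rewrite size_polyXn ltnS leq_exp2l ?q_gt1 //.
  by rewrite -ltnS prednK // (leq_ltn_trans (leq0n _) (ltn_ord l0)).
set D := \dim U.
pose X := vbasis U.
pose comb (c : {ffun 'I_D -> F}) : L := \sum_(i < D) c i *: X`_i.
pose s := [seq comb c | c : {ffun 'I_D -> F}].
have us : uniq s.
  rewrite map_inj_uniq ?enum_uniq // => c1 c2 E.
  have fX : free X := basis_free (vbasisP U).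
  apply/ffunP => i; apply/eqP; rewrite -subr_eq0; apply/eqP.
  move: i; move/freeP: fX => /(_ (fun i => c1 i - c2 i)) fX; apply: fX.
  under eq_bigr do rewrite scalerBl.
  by rewrite sumrB -/(comb c1) E subrr.
have rs : all (root P) s.
  apply/allP => z /mapP[c _ ->]; rewrite /root PE Hz //.
  apply: memv_suml => i _; apply: memvZ; apply: vbasis_mem.
  by apply: mem_nth; rewrite size_tuple.
have := max_poly_roots P0 rs us.
rewrite size_map -cardE card_ffun card_ord => H.
have := leq_trans H sP; rewrite ltnS.
have : (q ^ K.-1 < q ^ D)%N.
  rewrite ltn_exp2l ?q_gt1 //; apply: leq_trans dU.
  by rewrite prednK // (leq_ltn_trans (leq0n _) (ltn_ord l0)).
by move=> h1 h2; have := leq_ltn_trans h2 h1; rewrite ltnn.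
Qed.
End Gab.

Lemma uniq_dec (F : finFieldType) (L : fieldExtType F)
  (N K alpha k n d t : nat)
  (b : 'I_N -> L) (g : 'I_k -> 'I_alpha -> L)
  (G : 'I_k -> 'I_n -> 'M[F]_alpha)
  (Dm : 'I_n -> {set 'I_n} -> 'I_n -> 'M[F]_(alpha, repair_beta k alpha d))
  (Rm : 'I_n -> {set 'I_n} -> 'I_n -> 'M[F]_(repair_beta k alpha d, alpha)) :
  (K <= alpha * k)%N ->
  basis_of fullv [seq b i | i <- enum 'I_N] ->
  free [seq g p.1 p.2 | p : 'I_k * 'I_alpha] ->
  is_MDS_array G ->
  optimal_repair G Dm Rm ->
  (2 * t * alpha + 1 <= alpha * k - K + 1)%N ->
  forall (M M' : 'M[F]_(N, K)) (evs evs' : seq (event L n alpha)),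
  (#|(sys_run b g G Dm Rm M evs).2| <= t)%N ->
  (#|(sys_run b g G Dm Rm M' evs').2| <= t)%N ->
  forall S : {set 'I_n}, #|S| = k ->
  restrict S (sys_run b g G Dm Rm M evs).1 = restrict S (sys_run b g G Dm Rm M' evs').1 ->
  M = M'.
Proof.
move=> hK hb hg Hmds Hopt ht M M' evs evs' tA tA' S cS Heq.
have [V [dV HV]] := inv_run b g M evs Hopt.
have [V' [dV' HV']] := inv_run b g M' evs' Hopt.
set c := (sys_run b g G Dm Rm M evs).1 in HV Heq.
set c' := (sys_run b g G Dm Rm M' evs').1 in HV' Heq.
set W := (V + V')%VS.
have dW : (\dim W <= 2 * t * alpha)%N.
  apply: leq_trans (dimv_add_leqif _ _) _.
  have h1 := leq_trans dV (leq_mul (leqnn alpha) tA).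
  have h2 := leq_trans dV' (leq_mul (leqnn alpha) tA').
  lia.
pose x := fun j => gab_enc b g M j - gab_enc b g M' j.
have Hx : forall i, i \in S -> forall r, encL G x i 0 r \in W.
  move=> i iS r.
  have ceq : c i = c' i by have := congr1 (fun f => f i) Heq; rewrite /restrict iS.
  have -> : encL G x i = (c' i - encL G (gab_enc b g M') i) - (c i - encL G (gab_enc b g M) i).
    rewrite ceq opprB addrC addrA subrK /encL -sumrB; apply: eq_bigr => j _.
    by rewrite mulmxBl.
  rewrite mxE [X in _ + X]mxE; apply: memvB.
    by apply: (subvP (addvSr _ _)); apply: HV'.
  by apply: (subvP (addvSl _ _)); apply: HV.
have HxW := mds_lift Hmds cS Hx.
pose u := fun l => gab_msg b M l - gab_msg b M' l.
have xE : forall j r, x j 0 r = flin u (g j r).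
  move=> j r; rewrite /x /gab_enc !mxE -sumrB /flin; apply: eq_bigr => l _.
  by rewrite mulrBl.
set X := [seq g p.1 p.2 | p : 'I_k * 'I_alpha].
set U := <<X>>%VS.
have dU : \dim U = (alpha * k)%N.
  move: hg; rewrite /free => /eqP ->.
  by rewrite size_map -cardE card_prod !card_ord mulnC.
pose hf := linfun (flin u).
have img : (hf @: U <= W)%VS.
  rewrite limg_span; apply/span_subvP => z /mapP[y /mapP[p _ ->] ->].
  by rewrite lfunE /= -xE; apply: HxW.
have := limg_ker_dim hf U.
have := dimvS img.
rewrite dU => h1 h2.
have dker : (K <= \dim (U :&: lker hf))%N by lia.
have u0' : forall l, u l = 0.
  apply: (flin_roots dker) => z; rewrite memv_cap => /andP[_].
  by rewrite memv_ker lfunE /= => /eqP.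
apply/matrixP => i l.
have fT : free [tuple b i | i < N].
  have -> : [tuple b i | i < N] = [seq b i | i <- enum 'I_N] :> seq L.
    by [].
  exact: basis_free hb.
apply/eqP; rewrite -subr_eq0; apply/eqP; move: i.
move/freeP: fT => /(_ (fun i => M i l - M' i l)); apply.
transitivity (u l); last exact: u0' l.
rewrite /u /gab_msg -sumrB.
apply: eq_bigr => i _; rewrite -tnth_nth tnth_mktuple.
by rewrite scalerBl.
Qed.
End Aux.
Import Aux.

Theorem theorem1 (F : finFieldType) (L : fieldExtType F)
  (N K alpha k n d t : nat)
  (b : 'I_N -> L) (g : 'I_k -> 'I_alpha -> L)
  (G : 'I_k -> 'I_n -> 'M[F]_alpha)
  (Dm : 'I_n -> {set 'I_n} -> 'I_n -> 'M[F]_(alpha, repair_beta k alpha d))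
  (Rm : 'I_n -> {set 'I_n} -> 'I_n -> 'M[F]_(repair_beta k alpha d, alpha)) :
  (K < N)%N ->
  (K <= alpha * k)%N ->
  (alpha * k <= N)%N ->
  basis_of fullv [seq b i | i <- enum 'I_N] ->
  free [seq g p.1 p.2 | p : 'I_k * 'I_alpha] ->
  is_MDS_array G ->
  optimal_repair G Dm Rm ->
  (2 * t * alpha + 1 <= alpha * k - K + 1)%N ->
  exists dec : {set 'I_n} -> ('I_n -> 'rV[L]_alpha) -> 'M[F]_(N, K),
    forall (M : 'M[F]_(N, K)) (evs : seq (event L n alpha)),
      (#|(sys_run b g G Dm Rm M evs).2| <= t)%N ->
      forall S : {set 'I_n}, #|S| = k ->
        dec S (restrict S (sys_run b g G Dm Rm M evs).1) = M.
Proof.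
move=> _ hK _ hb hg Hmds Hopt ht.
pose P S y (M : 'M[F]_(N, K)) := exists evs : seq (event L n alpha),
  (#|(sys_run b g G Dm Rm M evs).2| <= t)%N /\ restrict S (sys_run b g G Dm Rm M evs).1 = y.
exists (fun S y => epsilon (inhabits 0) (P S y)).
move=> M evs tA S cS.
have PM : P S (restrict S (sys_run b g G Dm Rm M evs).1) M by exists evs.
have [evs' [tA' E]] := epsilon_spec (inhabits 0) _ (ex_intro _ M PM).
apply: esym; apply: (uniq_dec hK hb hg Hmds Hopt ht tA tA' cS).
by rewrite E.
Qed.
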